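(* Let $f(z)=z+\sum_{k=2}^{\infty}a_kz^k$ be analytic in $\mathbb{D}=\{z\in\mathbb{C}:|z|<1\}$ and suppose $zf'(z)-f(z)=\frac12 z^2\phi(z)$ for all $z\in\mathbb{D}$, where $\phi$ is analytic in $\mathbb{D}$ with $|\phi(z)|\le 1$. For $n\ge 2$ let $\rho_n(z;f)=\sum_{k=n+1}^{\infty}a_kz^k$. Then for $n\ge 2$ and $|z|=r<1$, \[|\rho_n(z;f)|\le -\frac{r}{2}\ln(1-r)-\frac{r^2}{2},\qquad |\rho_n'(z;f)|\le \frac{2r^2-r}{2(1-r)}-\frac{\ln(1-r)}{2},\qquad |z\rho_n''(z;f)|\le \frac{r^2(3-2r)}{2(1-r)^2}.\]
   Context: $\ln$ denotes the natural logarithm. *)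

(* Defs.v *)
From Stdlib Require Import Reals.
From Coquelicot Require Import Coquelicot.

(* Coefficient sequence of f(z) = z + sum_{k>=2} a_k z^k :
   coefficient 0 is 0, coefficient 1 is 1, coefficient k >= 2 is a k. *)
Definition f_coef (a : nat -> C) (k : nat) : C :=
  match k with
  | O => RtoC 0
  | S O => RtoC 1
  | _ => a k
  end.

Definition tail_coef (a : nat -> C) (n k : nat) : C :=
  if Nat.ltb n k then a k else RtoC 0.

Definition in_disk (z : C) : Prop := (Cmod z < 1)%R.

Definition holo_disk (g : C -> C) : Prop :=
  forall z : C, in_disk z -> @ex_derive C_AbsRing C_NormedModule g z.

(* Main.v *)
Require Import Defs.
From Stdlib Require Import Reals Lra Lia.
From Coquelicot Require Import Coquelicot.
Open Scope R_scope.


Lemma Cmod_pow_n (z : C) k : Cmod (pow_n z k) = Cmod z ^ k.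
Proof.
  induction k as [|k IH]; simpl.
  - apply Cmod_1.
  - change (Cmod (Cmult z (pow_n z k)) = Cmod z * Cmod z ^ k).
    rewrite Cmod_mult, IH; reflexivity.
Qed.

Lemma norm_sum_le (e : nat -> C) (b : nat -> R) n :
  (forall k, Cmod (e k) <= b k) -> Cmod (sum_n e n) <= sum_n b n.
Proof.
  intros H; induction n as [|n IH].
  - rewrite !sum_O; apply H.
  - rewrite !sum_Sn. change (Cmod (Cplus (sum_n e n) (e (S n))) <= sum_n b n + b (S n)).
    eapply Rle_trans; [apply Cmod_triangle|]. specialize (H (S n)); lra.
Qed.

Lemma series_norm_le (e : nat -> C) (b : nat -> R) E B :
  is_series e E -> is_series b B -> (forall k, Cmod (e k) <= b k) -> Cmod E <= B.
Proof.
  intros HE HB H.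
  assert (H1 : is_lim_seq (fun n => Cmod (sum_n e n)) (Cmod E)).
  { change (filterlim (fun n => norm (sum_n e n)) eventually (locally (norm E))).
    apply (filterlim_comp _ _ _ (sum_n e) norm eventually (locally E)); [exact HE|].
    apply filterlim_norm. }
  assert (H2 : is_lim_seq (sum_n b) B) by exact HB.
  pose proof (is_lim_seq_le _ _ _ _ (fun n => norm_sum_le e b n H) H1 H2) as H3.
  exact H3.
Qed.

Lemma series_le_bound (b : nat -> R) B K :
  is_series b B -> (forall n, sum_n b n <= K) -> B <= K.
Proof.
  intros HB H.
  assert (H2 : is_lim_seq (sum_n b) B) by exact HB.
  pose proof (is_lim_seq_le _ _ _ _ H H2 (is_lim_seq_const K)) as H3.
  exact H3.
Qed.

Lemma terms_bounded (c : nat -> C) (w : C) :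
  ex_pseries c w -> exists M, forall n, Cmod (c n) * Cmod w ^ n <= M.
Proof.
  intros [l Hl].
  destruct (filterlim_bounded (sum_n (fun k => scal (pow_n w k) (c k))))
    as [M HM].
  { exists l; exact Hl. }
  exists (2 * M). intros n.
  assert (HM0 : 0 <= M) by (eapply Rle_trans; [apply (norm_ge_0 (sum_n (fun k => scal (pow_n w k) (c k)) O))|apply (HM O)]).
  assert (Heq : Cmod (c n) * Cmod w ^ n = Cmod (scal (pow_n w n) (c n))).
  { change (Cmod (c n) * Cmod w ^ n = Cmod (Cmult (pow_n w n) (c n))).
    rewrite Cmod_mult, Cmod_pow_n; ring. }
  rewrite Heq. destruct n as [|n].
  - pose proof (HM O) as H0. rewrite sum_O in H0. change (Cmod (scal (pow_n w 0) (c 0%nat)) <= M) in H0. lra.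
  - assert (E : scal (pow_n w (S n)) (c (S n)) =
               minus (sum_n (fun k => scal (pow_n w k) (c k)) (S n))
                     (sum_n (fun k => scal (pow_n w k) (c k)) n)).
    { rewrite sum_Sn. set (X := sum_n _ n). set (Y := scal _ _).
      change (@eq C Y (Cminus (Cplus X Y) X)). clearbody X Y. change C in X, Y. ring. }
    rewrite E. pose proof (HM (S n)) as H1; pose proof (HM n) as H2.
    revert H1 H2. set (X := sum_n _ (S n)). set (Y := sum_n _ n).
    change (Cmod X <= M -> Cmod Y <= M -> Cmod (Cplus X (Copp Y)) <= 2 * M).
    intros H1 H2. pose proof (Cmod_triangle X (Copp Y)). rewrite Cmod_opp in H. lra.
Qed.

Definition alpha (c : nat -> C) (k : nat) : R := Cmod (c k).

Lemma radius_ge (c : nat -> C) :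
  (forall w, Cmod w < 1 -> ex_pseries c w) ->
  forall x, Rabs x < 1 -> Rbar_lt (Rabs x) (CV_radius (alpha c)).
Proof.
  intros H x Hx.
  set (s := (Rabs x + 1) / 2).
  assert (Hs0 : 0 <= s) by (unfold s; pose proof (Rabs_pos x); lra).
  assert (Hs : Cmod (RtoC s) = s) by (rewrite Cmod_R; apply Rabs_pos_eq; lra).
  destruct (terms_bounded c (RtoC s)) as [M HM].
  { apply H. rewrite Hs. unfold s; lra. }
  assert (Hle : Rbar_le s (CV_radius (alpha c))).
  { apply (proj1 (CV_radius_bounded (alpha c))).
    exists M. intros n. specialize (HM n). rewrite Hs in HM.
    unfold alpha. rewrite Rabs_mult, Rabs_pos_eq by apply Cmod_ge_0.
    rewrite Rabs_pos_eq by (apply pow_le; lra). exact HM. }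
  destruct (CV_radius (alpha c)) as [r| |]; simpl in *; try tauto.
  unfold s in Hle. lra.
Qed.

Lemma abs_conv (c : nat -> C) :
  (forall w, Cmod w < 1 -> ex_pseries c w) ->
  forall x, 0 <= x < 1 -> is_pseries (alpha c) x (PSeries (alpha c) x).
Proof.
  intros H x Hx. apply PSeries_correct, CV_radius_inside, radius_ge; auto.
  rewrite Rabs_pos_eq; lra.
Qed.

Definition dC (c : nat -> C) (k : nat) : C := Cmult (RtoC (INR (S k))) (c (S k)).

Lemma alpha_dC c k : alpha (dC c) k = PS_derive (alpha c) k.
Proof.
  unfold alpha, dC, PS_derive. rewrite Cmod_mult, Cmod_R, Rabs_pos_eq by apply pos_INR.
  reflexivity.
Qed.

Lemma dC_conv (c : nat -> C) :
  (forall w, Cmod w < 1 -> ex_pseries c w) ->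
  forall w, Cmod w < 1 -> ex_pseries (dC c) w.
Proof.
  intros H w Hw.
  assert (Hr : Rbar_lt (Rabs (Cmod w)) (CV_radius (PS_derive (alpha c)))).
  { rewrite CV_radius_derive. apply radius_ge; auto. rewrite Rabs_pos_eq by apply Cmod_ge_0; exact Hw. }
  pose proof (CV_radius_inside _ _ Hr) as [l Hl].
  unfold ex_pseries.
  apply (@ex_series_le C_AbsRing C_CompleteNormedModule _ (fun k => scal (pow_n (Cmod w) k) (PS_derive (alpha c) k))).
  - intros k. change (Cmod (Cmult (pow_n w k) (dC c k)) <= pow_n (Cmod w) k * PS_derive (alpha c) k).
    rewrite Cmod_mult. rewrite Cmod_pow_n. rewrite <- alpha_dC. unfold alpha. right. f_equal.
  - exists l; exact Hl.
Qed.

Definition Dc (z h : C) (k : nat) : C :=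
  Cminus (Cminus (pow_n (Cplus z h) k) (pow_n z k))
         (Cmult h (Cmult (RtoC (INR k)) (pow_n z (pred k)))).
Definition Er (A T : R) (k : nat) : R :=
  (A + T) ^ k - A ^ k - T * (INR k * A ^ (pred k)).

Lemma Dc_0 z h : Dc z h 0 = RtoC 0.
Proof. unfold Dc. simpl pred. change (pow_n (Cplus z h) 0) with (RtoC 1).
  change (pow_n z 0) with (RtoC 1). change (INR 0) with 0. ring. Qed.

Lemma Dc_1 z h : Dc z h 1 = RtoC 0.
Proof. unfold Dc. simpl pred. change (pow_n (Cplus z h) 1) with (Cmult (Cplus z h) (RtoC 1)).
  change (pow_n z 1) with (Cmult z (RtoC 1)). change (pow_n z 0) with (RtoC 1).
  change (INR 1) with 1. ring. Qed.

Lemma Dc_rec z h m : Dc z h (S (S m)) =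
  Cplus (Cmult (Cplus z h) (Dc z h (S m))) (Cmult (RtoC (INR (S m))) (Cmult (Cmult h h) (pow_n z m))).
Proof.
  unfold Dc. simpl pred.
  change (pow_n (Cplus z h) (S (S m))) with (Cmult (Cplus z h) (pow_n (Cplus z h) (S m))).
  change (pow_n z (S (S m))) with (Cmult z (pow_n z (S m))).
  change (pow_n z (S m)) with (Cmult z (pow_n z m)).
  rewrite (S_INR (S m)), RtoC_plus.
  ring.
Qed.

Lemma Er_rec A T m : Er A T (S (S m)) = (A + T) * Er A T (S m) + INR (S m) * (T * T * A ^ m).
Proof. unfold Er. simpl pred. rewrite (S_INR (S m)). simpl. ring. Qed.

Lemma Dc_bound z h k : Cmod (Dc z h k) <= Er (Cmod z) (Cmod h) k.
Proof.
  destruct k as [|k].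
  - rewrite Dc_0, Cmod_0. unfold Er. simpl. lra.
  - induction k as [|k IH].
    + rewrite Dc_1, Cmod_0. unfold Er. simpl. lra.
    + rewrite Dc_rec, Er_rec.
      eapply Rle_trans; [apply Cmod_triangle|].
      rewrite !Cmod_mult, Cmod_R, Rabs_pos_eq by apply pos_INR.
      rewrite Cmod_pow_n.
      pose proof (Cmod_triangle z h).
      pose proof (Cmod_ge_0 (Dc z h (S k))).
      pose proof (Cmod_ge_0 z). pose proof (Cmod_ge_0 h).
      apply Rplus_le_compat; [|right; ring].
      apply Rmult_le_compat; auto. apply Cmod_ge_0.
Qed.

Lemma shift_series_C (c : nat -> C) (z l1 : C) :
  is_pseries (dC c) z l1 ->
  is_series (fun k => Cmult (pow_n z (pred k)) (Cmult (RtoC (INR k)) (c k))) l1.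
Proof.
  intros H. apply is_series_decr_1.
  match goal with |- is_series _ ?L => replace L with l1 end.
  - exact H.
  - change (@eq C l1 (Cplus l1 (Copp (Cmult (pow_n z (pred 0)) (Cmult (RtoC 0) (c 0%nat)))))). ring.
Qed.

Lemma shift_series_R (a : nat -> R) (x l1 : R) :
  is_pseries (PS_derive a) x l1 ->
  is_series (fun k => x ^ (pred k) * (INR k * a k)) l1.
Proof.
  intros H. apply is_series_decr_1.
  match goal with |- is_series _ ?L => replace L with l1 end.
  - eapply is_series_ext; [|exact H]. intros k. simpl pred.
    unfold PS_derive. change (scal (pow_n x k) (INR (S k) * a (S k))) with (pow_n x k * (INR (S k) * a (S k))).
    rewrite pow_n_pow. reflexivity.
  - change (l1 = l1 + - (x ^ (pred 0) * (0 * a 0%nat))). ring.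

Qed.

Lemma pseries_derive (c : nat -> C) (g : C -> C) :
  (forall w, Cmod w < 1 -> is_pseries c w (g w)) ->
  forall z, Cmod z < 1 -> forall l1, is_pseries (dC c) z l1 -> is_derive g z l1.
Proof.
  intros Hg z Hz l1 Hl1.
  assert (Hex : forall w, Cmod w < 1 -> ex_pseries c w) by (intros w Hw; exists (g w); exact (Hg w Hw)).
  set (A := Cmod z).
  assert (HA0 : 0 <= A) by apply Cmod_ge_0.
  set (G := PSeries (alpha c)).
  set (G' := PSeries (PS_derive (alpha c)) A).
  assert (HrA : Rbar_lt (Rabs A) (CV_radius (alpha c))) by (apply radius_ge; auto; rewrite Rabs_pos_eq; auto).
  pose proof (is_derive_PSeries _ _ HrA) as HG.
  apply is_derive_Reals in HG.
  assert (HG's : is_pseries (PS_derive (alpha c)) A G').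
  { apply PSeries_correct, CV_radius_inside. rewrite CV_radius_derive. exact HrA. }
  pose proof (shift_series_R _ _ _ HG's) as HGs.
  pose proof (shift_series_C _ _ _ Hl1) as HT.
  split; [apply is_linear_scal_l|].
  intros x Hx. apply (@is_filter_lim_locally_unique C_AbsRing (AbsRing_NormedModule C_AbsRing)) in Hx. subst x.
  intros eps.
  destruct (HG eps (cond_pos eps)) as [del Hdel].
  apply (@locally_norm_le_locally C_AbsRing (AbsRing_NormedModule C_AbsRing)).
  assert (Hpos : 0 < Rmin del (1 - A)).
  { apply Rmin_glb_lt; [apply cond_pos| unfold A; lra]. }
  exists (mkposreal _ Hpos). intros y Hy. unfold ball_norm in Hy. simpl in Hy.
  change C in y. change (Cmod (Cminus y z) < Rmin del (1-A)) in Hy.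
  change (Cmod (Cminus (Cminus (g y) (g z)) (Cmult (Cminus y z) l1)) <= eps * Cmod (Cminus y z)).
  set (h := Cminus y z) in *.
  assert (Hy' : y = Cplus z h) by (unfold h; change (@eq C y (Cplus z (Cminus y z))); ring).
  set (T := Cmod h).
  assert (HT0 : 0 <= T) by apply Cmod_ge_0.
  assert (HTd : T < del) by (pose proof (Rmin_l del (1 - A)); unfold T; lra).
  assert (HT1 : A + T < 1) by (pose proof (Rmin_r del (1 - A)); unfold T; lra).
  destruct (Req_dec T 0) as [HT00|HT00].
  { apply Cmod_eq_0 in HT00. rewrite HT00 in Hy'.
    rewrite Hy', HT00. fold T. rewrite (Cmod_eq_0 _ HT00) || idtac.
    replace (Cminus (Cminus (g (Cplus z 0)) (g z)) (Cmult 0 l1)) with (RtoC 0).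
    - rewrite Cmod_0. unfold T. rewrite HT00, Cmod_0. right; ring.
    - replace (Cplus z 0) with z by ring. ring. }
  assert (HSy : is_series (fun k => scal (pow_n (Cplus z h) k) (c k)) (g (Cplus z h))).
  { apply Hg. rewrite <- Hy'. eapply Rle_lt_trans; [|exact HT1].
    rewrite Hy'. apply Cmod_triangle. }
  assert (HSz : is_series (fun k => scal (pow_n z k) (c k)) (g z)) by (apply Hg; auto).
  pose proof (is_series_minus _ _ _ _ (is_series_minus _ _ _ _ HSy HSz) (is_series_scal h _ _ HT)) as HC.
  assert (HRa : is_pseries (alpha c) (A + T) (G (A + T))).
  { apply abs_conv; [exact Hex | lra]. }
  assert (HRb : is_pseries (alpha c) A (G A)).
  { apply abs_conv; [exact Hex | lra]. }
  pose proof (is_series_minus _ _ _ _ (is_series_minus _ _ _ _ HRa HRb) (is_series_scal T _ _ HGs)) as HR.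
  rewrite Hy'.
  eapply Rle_trans.
  { apply (series_norm_le _ (fun k => alpha c k * Er A T k) _ _ HC).
    - eapply is_series_ext; [|exact HR]. intros k.
      change (scal (pow_n (A + T) k) (alpha c k) + - scal (pow_n A k) (alpha c k) + - (T * (A ^ pred k * (INR k * alpha c k)))
        = alpha c k * Er A T k).
      change (scal (pow_n (A + T) k) (alpha c k)) with (pow_n (A + T) k * alpha c k).
      change (scal (pow_n A k) (alpha c k)) with (pow_n A k * alpha c k).
      rewrite !pow_n_pow. replace (pow_n A k) with (A ^ k) by (symmetry; apply pow_n_pow). unfold Er. ring.
    - intros k.
      change (Cmod (Cplus (Cplus (Cmult (pow_n (Cplus z h) k) (c k)) (Copp (Cmult (pow_n z k) (c k))))
        (Copp (Cmult h (Cmult (pow_n z (pred k)) (Cmult (RtoC (INR k)) (c k)))))) <= alpha c k * Er A T k).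
      replace (Cplus (Cplus (Cmult (pow_n (Cplus z h) k) (c k)) (Copp (Cmult (pow_n z k) (c k))))
        (Copp (Cmult h (Cmult (pow_n z (pred k)) (Cmult (RtoC (INR k)) (c k))))))
        with (Cmult (c k) (Dc z h k)) by (unfold Dc; ring).
      rewrite Cmod_mult. apply Rmult_le_compat_l; [apply Cmod_ge_0|]. apply Dc_bound. }
  assert (HTpos : 0 < T) by lra.
  specialize (Hdel T (Rgt_not_eq _ _ HTpos)).
  rewrite Rabs_pos_eq in Hdel by lra. specialize (Hdel HTd).
  assert (Hdel' : Rabs (G (A + T) - G A - T * G') < eps * T).
  { replace (G (A + T) - G A - T * G') with (T * ((G (A + T) - G A) / T - G')) by (field; lra).
    rewrite Rabs_mult, Rabs_pos_eq by lra. rewrite Rmult_comm. apply Rmult_lt_compat_r; auto. }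
  change (plus (plus (G (A + T)) (opp (G A))) (opp (scal T G')) <= eps * T).
  change (G (A + T) + - G A + - (T * G') <= eps * T).
  pose proof (Rle_abs (G (A + T) - G A - T * G')). lra.
Qed.

Ltac cring := match goal with |- ?a = ?b => change (@eq C a b); ring end.

Lemma cp_S (x : C) k : pow_n x (S k) = Cmult x (pow_n x k).
Proof. reflexivity. Qed.
Lemma cp_0 (x : C) : pow_n x 0 = RtoC 1.
Proof. reflexivity. Qed.
Lemma cp_plus (x : C) a b : pow_n x (a + b) = Cmult (pow_n x a) (pow_n x b).
Proof. exact (@pow_n_plus C_Ring x a b). Qed.
Lemma cp_mult (x : C) a b : pow_n x (a * b) = pow_n (pow_n x a) b.
Proof.
  induction b as [|b IH].
  - rewrite Nat.mul_0_r. reflexivity.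
  - rewrite Nat.mul_succ_r, cp_plus, IH, cp_S. cring.
Qed.
Lemma cp_Cmult (x y : C) k : pow_n (Cmult x y) k = Cmult (pow_n x k) (pow_n y k).
Proof.
  induction k as [|k IH].
  - rewrite !cp_0. cring.
  - rewrite !cp_S, IH. cring.
Qed.
Lemma cp_one k : pow_n (RtoC 1) k = RtoC 1.
Proof. induction k as [|k IH]; [reflexivity|]. rewrite cp_S, IH. cring. Qed.

Lemma sum_ones n : sum_n (fun _ => RtoC 1) n = RtoC (INR (S n)).
Proof.
  induction n as [|n IH].
  - rewrite sum_O. simpl. reflexivity.
  - rewrite sum_Sn, IH. rewrite (S_INR (S n)), RtoC_plus. reflexivity.
Qed.

Lemma geom_sum (q : C) n :
  Cmult (Cminus q (RtoC 1)) (sum_n (fun m => pow_n q m) n) = Cminus (pow_n q (S n)) (RtoC 1).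
Proof.
  induction n as [|n IH].
  - rewrite sum_O, cp_S, cp_0. ring.
  - rewrite sum_Sn. change (plus ?a ?b) with (Cplus a b).
    rewrite Cmult_plus_distr_l, IH. rewrite (cp_S q (S n)). ring.
Qed.

Lemma geom_zero (q : C) n :
  pow_n q (S n) = RtoC 1 -> q <> RtoC 1 -> sum_n (fun m => pow_n q m) n = RtoC 0.
Proof.
  intros H1 H2.
  pose proof (geom_sum q n) as H. rewrite H1 in H.
  assert (Hq : Cminus q (RtoC 1) <> RtoC 0).
  { intros E. apply H2. replace q with (Cplus (Cminus q (RtoC 1)) (RtoC 1)) by ring.
    rewrite E. ring. }
  replace (sum_n (fun m => pow_n q m) n) with
     (Cmult (Cinv (Cminus q (RtoC 1))) (Cmult (Cminus q (RtoC 1)) (sum_n (fun m => pow_n q m) n))).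
  - rewrite H. cring.
  - change (@eq C (Cmult (Cinv (Cminus q (RtoC 1))) (Cmult (Cminus q (RtoC 1)) (sum_n (fun m => pow_n q m) n))) (sum_n (fun m => pow_n q m) n)). field. exact Hq.
Qed.

Lemma sum_n_zero (a : nat -> C) n : (forall l, (l <= n)%nat -> a l = RtoC 0) -> sum_n a n = RtoC 0.
Proof.
  induction n as [|n IH]; intros H.
  - rewrite sum_O. apply H. lia.
  - rewrite sum_Sn, IH by (intros; apply H; lia). rewrite H by lia.
    change (@eq C (Cplus (RtoC 0) (RtoC 0)) (RtoC 0)). ring.
Qed.

Lemma sum_n_single (a : nat -> C) n j : (j <= n)%nat ->
  (forall l, (l <= n)%nat -> l <> j -> a l = RtoC 0) -> sum_n a n = a j.
Proof.
  induction n as [|n IH]; intros Hj H.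
  - rewrite sum_O. assert (j = O) by lia. subst. reflexivity.
  - rewrite sum_Sn. destruct (Nat.eq_dec j (S n)) as [E|E].
    + subst j. rewrite sum_n_zero by (intros; apply H; lia).
      change (@eq C (Cplus (RtoC 0) (a (S n))) (a (S n))). ring.
    + rewrite IH by (try lia; intros; apply H; lia). rewrite (H (S n)) by lia.
      change (@eq C (Cplus (a j) (RtoC 0)) (a j)). ring.
Qed.

Lemma sum_n_nonneg (b : nat -> R) n : (forall k, 0 <= b k) -> 0 <= sum_n b n.
Proof.
  intros H. induction n as [|n IH].
  - rewrite sum_O; auto.
  - rewrite sum_Sn. change (0 <= sum_n b n + b (S n)). specialize (H (S n)). lra.
Qed.

Lemma is_series_sum_n (F : nat -> nat -> C) (L : nat -> C) n :
  (forall m, is_series (F m) (L m)) ->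
  is_series (fun l => sum_n (fun m => F m l) n) (sum_n L n).
Proof.
  intros H. induction n as [|n IH].
  - rewrite sum_O. eapply is_series_ext; [|apply (H O)]. intros l. rewrite sum_O. reflexivity.
  - rewrite sum_Sn. eapply is_series_ext; [|apply (is_series_plus _ _ _ _ IH (H (S n)))].
    intros l. simpl. rewrite sum_Sn. reflexivity.
Qed.

Definition om (N : nat) : C := (cos (2 * PI / INR N), sin (2 * PI / INR N)).

Lemma om_pow N m : pow_n (om N) m = (cos (2 * PI / INR N * INR m), sin (2 * PI / INR N * INR m)).
Proof.
  induction m as [|m IH].
  - simpl INR. rewrite Rmult_0_r, cos_0, sin_0. reflexivity.
  - rewrite cp_S, IH. unfold om. rewrite S_INR, Rmult_plus_distr_l, Rmult_1_r, cos_plus, sin_plus.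
    unfold Cmult; simpl. f_equal; ring.
Qed.

Lemma Cmod_cos_sin x : Cmod (cos x, sin x) = 1.
Proof.
  unfold Cmod. cbn [fst snd]. replace (cos x ^ 2 + sin x ^ 2) with 1 by (rewrite <- (sin2_cos2 x); unfold Rsqr; ring). apply sqrt_1.
Qed.

Lemma Cmod_om_pow N m : Cmod (pow_n (om N) m) = 1.
Proof. rewrite om_pow. apply Cmod_cos_sin. Qed.

Lemma om_N N : (0 < N)%nat -> pow_n (om N) N = RtoC 1.
Proof.
  intros HN. rewrite om_pow.
  replace (2 * PI / INR N * INR N) with (2 * PI).
  - rewrite cos_2PI, sin_2PI. reflexivity.
  - field. apply not_0_INR. lia.
Qed.

Lemma om_ne1 N p : (0 < p < N)%nat -> pow_n (om N) p <> RtoC 1.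
Proof.
  intros Hp E. rewrite om_pow in E.
  injection E as E1 E2.
  set (t := 2 * PI / INR N * INR p) in *.
  assert (HN : 0 < INR N) by (apply lt_0_INR; lia).
  assert (Hp0 : 0 < INR p) by (apply lt_0_INR; lia).
  assert (HpN : INR p < INR N) by (apply lt_INR; lia).
  pose proof PI_RGT_0.
  assert (Ht0 : 0 < t) by (unfold t; apply Rmult_lt_0_compat; auto; apply Rdiv_lt_0_compat; lra).
  assert (Ht2 : t < 2 * PI).
  { unfold t. replace (2 * PI / INR N * INR p) with (2 * PI * (INR p / INR N)) by (field; lra).
    assert (INR p / INR N < 1) by (apply (Rmult_lt_reg_r (INR N)); [lra|]; unfold Rdiv; rewrite Rmult_assoc, Rinv_l by lra; lra).
    assert (0 < 2 * PI) by lra. rewrite <- (Rmult_1_r (2 * PI)) at 2. apply Rmult_lt_compat_l; lra. }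
  destruct (Rtotal_order t PI) as [H1|[H1|H1]].
  - pose proof (sin_gt_0 t Ht0 H1). lra.
  - rewrite H1, cos_PI in E1. lra.
  - pose proof (sin_lt_0 t H1 Ht2). lra.
Qed.


Lemma pow_le_1' q k : 0 <= q <= 1 -> q ^ k <= 1.
Proof.
  intros Hq. induction k as [|k IH]; simpl; [lra|].
  pose proof (pow_le q k (proj1 Hq)). nra.
Qed.

Lemma cauchy_core (d : nat -> C) (psi : C -> C) (M r s K : R) (n0 j : nat) :
  (forall w, Cmod w < 1 -> is_pseries d w (psi w)) ->
  (forall w, Cmod w < 1 -> Cmod (psi w) <= M) ->
  0 < r -> r < s -> s < 1 ->
  is_series (fun k => alpha d k * s ^ k) K -> (j <= n0)%nat ->
  Cmod (d j) * r ^ j <= M + (r / s) ^ (S n0) * K.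
Proof.
  intros Hd HM Hr Hrs Hs1 HK Hj.
  set (N := S n0).
  set (u := pow_n (om N) (N - j)).
  set (w := fun m => Cmult (RtoC r) (pow_n (om N) m)).
  assert (Hw : forall m, Cmod (w m) = r).
  { intros m. unfold w. rewrite Cmod_mult, Cmod_R, Cmod_om_pow, Rabs_pos_eq; lra. }
  assert (Hw1 : forall m, Cmod (w m) < 1) by (intros m; rewrite Hw; lra).
  set (A := sum_n (fun m => Cmult (pow_n u m) (psi (w m))) n0).
  set (Sl := fun l => sum_n (fun m => pow_n (pow_n (om N) (l + (N - j))) m) n0).
  set (a := fun l => Cmult (Cmult (d l) (pow_n (RtoC r) l)) (Sl l)).
  assert (HA : is_series a A).
  { eapply is_series_ext;
      [| apply (is_series_sum_n (fun m l => Cmult (pow_n u m) (scal (pow_n (w m) l) (d l)))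
                 (fun m => Cmult (pow_n u m) (psi (w m))))].
    - intros l. unfold a, Sl.
      rewrite <- (sum_n_mult_l (K := C_Ring)). apply sum_n_ext. intros m.
      change (scal (pow_n (w m) l) (d l)) with (Cmult (pow_n (w m) l) (d l)).
      unfold w, u. rewrite cp_Cmult. rewrite <- !cp_mult.
      replace ((l + (N - j)) * m)%nat with (m * l + (N - j) * m)%nat by ring.
      rewrite cp_plus. change (mult ?x ?y) with (Cmult x y). cring.
    - intros m. exact (@is_series_scal C_AbsRing C_NormedModule (pow_n u m) _ _ (Hd _ (Hw1 m))). }
  assert (HNpos : (0 < N)%nat) by (unfold N; lia).
  assert (Hom1 : pow_n (om N) N = RtoC 1) by (apply om_N; auto).
  assert (HSj : Sl j = RtoC (INR N)).
  { unfold Sl. replace (j + (N - j))%nat with N by (unfold N; lia). rewrite Hom1.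
    rewrite (sum_n_ext _ (fun _ => RtoC 1)) by (intros; apply cp_one). apply sum_ones. }
  assert (HS0 : forall l, (l <= n0)%nat -> l <> j -> Sl l = RtoC 0).
  { intros l Hl Hlj. unfold Sl. apply geom_zero.
    - rewrite <- cp_mult. rewrite Nat.mul_comm, cp_mult. fold N. rewrite Hom1. apply cp_one.
    - set (p := (l + (N - j))%nat).
      destruct (Nat.lt_ge_cases p N) as [Hp|Hp].
      + apply om_ne1. unfold p; split; lia.
      + replace p with (N + (p - N))%nat by lia. rewrite cp_plus, Hom1.
        rewrite Cmult_1_l.
        apply om_ne1. unfold p, N in *; split; lia. }
  assert (HSb : forall l, Cmod (Sl l) <= INR N).
  { intros l. unfold Sl. eapply Rle_trans; [apply (norm_sum_le _ (fun _ => 1))|].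
    - intros m. rewrite Cmod_pow_n, Cmod_om_pow, pow1. lra.
    - rewrite sum_n_const. unfold N. lra. }
  assert (Hsum : sum_n a n0 = a j).
  { apply sum_n_single; auto. intros l Hl Hlj. unfold a. rewrite HS0 by auto. cring. }
  set (T := Cminus A (a j)).
  assert (HT : is_series (fun k => a (N + k)%nat) T).
  { apply (is_series_incr_n a N T); auto. pose proof Hsum as Hs'. change (@sum_n (NormedModule.AbelianMonoid C_AbsRing C_NormedModule) a (pred N) = a j) in Hs'. rewrite Hs'.
    match goal with |- is_series _ ?L => replace L with A end; [exact HA|]; ( (unfold T; generalize A (a j); intros X Y; change C in X, Y; change (@eq C X (Cplus (Cminus X Y) Y)); ring)). }
  set (P := sum_n (fun k => alpha d k * s ^ k) n0).
  assert (HP : 0 <= P).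
  { apply sum_n_nonneg. intros k. apply Rmult_le_pos; [apply Cmod_ge_0|apply pow_le; lra]. }
  assert (HK' : is_series (fun k => alpha d (N + k)%nat * s ^ (N + k)) (K - P)).
  { apply (is_series_incr_n (fun k => alpha d k * s ^ k)); auto.
    match goal with |- is_series _ ?L => replace L with K end; [exact HK|]. unfold P. simpl pred. change (plus ?x ?y) with (x + y). match goal with |- K = K - ?a + ?b => replace b with a by reflexivity end; ring. }
  set (q := r / s).
  assert (Hq : 0 <= q <= 1).
  { unfold q. split; [apply Rdiv_le_0_compat; lra|].
    apply (Rmult_le_reg_r s); [lra|]. unfold Rdiv. rewrite Rmult_assoc, Rinv_l by lra. lra. }
  pose proof (is_series_scal (INR N * q ^ N) _ _ HK') as HK''.
  assert (HTb : Cmod T <= INR N * q ^ N * (K - P)).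
  { apply (series_norm_le _ _ _ _ HT HK''). intros k.
    change (Cmod (a (N + k)%nat) <= INR N * q ^ N * (alpha d (N + k)%nat * s ^ (N + k))).
    unfold a. rewrite !Cmod_mult, Cmod_pow_n, Cmod_R, Rabs_pos_eq by lra.
    assert (Hrk : r ^ (N + k) <= q ^ N * s ^ (N + k)).
    { replace r with (q * s) at 1 by (unfold q; field; lra).
      rewrite Rpow_mult_distr, pow_add. apply Rmult_le_compat_r; [apply pow_le; lra|].
      rewrite <- (Rmult_1_r (q ^ N)) at 2. apply Rmult_le_compat_l; [apply pow_le; lra | apply pow_le_1'; auto]. }
    pose proof (HSb (N + k)%nat). pose proof (Cmod_ge_0 (d (N + k)%nat)).
    pose proof (pow_le r (N + k) ltac:(lra)).
    unfold alpha.
    assert (0 <= INR N) by apply pos_INR.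
    pose proof (pow_le q N (proj1 Hq)). pose proof (pow_le s (N + k) ltac:(lra)).
    apply Rle_trans with (Cmod (d (N + k)%nat) * r ^ (N + k) * INR N).
    - apply Rmult_le_compat_l; auto. apply Rmult_le_pos; auto.
    - apply Rle_trans with (Cmod (d (N + k)%nat) * (q ^ N * s ^ (N + k)) * INR N).
      + apply Rmult_le_compat_r; auto. apply Rmult_le_compat_l; auto.
      + right; ring. }
  assert (HAb : Cmod A <= INR N * M).
  { unfold A. eapply Rle_trans; [apply (norm_sum_le _ (fun _ => M))|].
    - intros m. rewrite Cmod_mult. unfold u. rewrite <- cp_mult, Cmod_om_pow, Rmult_1_l. apply HM, Hw1.
    - rewrite sum_n_const. right. reflexivity. }
  assert (Haj : Cmod (a j) = Cmod (d j) * r ^ j * INR N).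
  { unfold a. rewrite HSj, !Cmod_mult, Cmod_pow_n, !Cmod_R, !Rabs_pos_eq; auto; try lra. apply pos_INR. }
  assert (Hdecomp : a j = Cminus A T) by (unfold T; cring).
  assert (Htri : Cmod (a j) <= Cmod A + Cmod T).
  { rewrite Hdecomp. pose proof (Cmod_triangle A (Copp T)). rewrite Cmod_opp in H. exact H. }
  assert (HNp : 0 < INR N) by (apply lt_0_INR; auto).
  pose proof (pow_le q N (proj1 Hq)).
  assert (HKP : INR N * q ^ N * (K - P) <= INR N * q ^ N * K).
  { apply Rmult_le_compat_l; [apply Rmult_le_pos; lra|lra]. }
  rewrite Haj in Htri.
  apply (Rmult_le_reg_r (INR N)); auto.
  fold N. fold q. nra.
Qed.

Lemma bernoulli r j : 0 <= r <= 1 -> 1 - INR j * (1 - r) <= r ^ j.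
Proof.
  intros Hr. induction j as [|j IH].
  - simpl. lra.
  - rewrite S_INR. simpl.
    assert (H1 : r * (1 - INR j * (1 - r)) <= r * r ^ j) by (apply Rmult_le_compat_l; lra).
    pose proof (pos_INR j).
    assert (H2 : 0 <= INR j * ((1 - r) * (1 - r))) by (apply Rmult_le_pos; nra).
    nra.
Qed.

Lemma limit_to_1 X M j : 0 <= X -> (forall r, 0 < r < 1 -> X * r ^ j <= M) -> X <= M.
Proof.
  intros HX H.
  destruct (Rle_or_lt X M) as [|HXM]; auto. exfalso.
  set (J := INR j). assert (HJ : 0 <= J) by apply pos_INR.
  set (e := Rmin (1/2) ((X - M) / (2 * (X * J + 1)))).
  assert (He1 : e <= 1/2) by apply Rmin_l.
  assert (He2 : e <= (X - M) / (2 * (X * J + 1))) by apply Rmin_r.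
  assert (HXJ : 0 <= X * J) by nra.
  assert (He0 : 0 < e).
  { apply Rmin_glb_lt; [lra|]. apply Rdiv_lt_0_compat; lra. }
  specialize (H (1 - e) ltac:(lra)).
  pose proof (bernoulli (1 - e) j ltac:(lra)) as Hb. fold J in Hb.
  replace (1 - (1 - e)) with e in Hb by ring.
  assert (Hk : X * J * e <= (X - M) / 2).
  { apply Rle_trans with (X * J * ((X - M) / (2 * (X * J + 1)))).
    - apply Rmult_le_compat_l; auto.
    - apply (Rmult_le_reg_r (2 * (X * J + 1))); [lra|].
      replace (X * J * ((X - M) / (2 * (X * J + 1))) * (2 * (X * J + 1))) with (X * J * (X - M)) by (field; lra).
      nra. }
  nra.
Qed.

Lemma cauchy_est (d : nat -> C) (psi : C -> C) (M : R) :
  (forall w, Cmod w < 1 -> is_pseries d w (psi w)) ->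
  (forall w, Cmod w < 1 -> Cmod (psi w) <= M) ->
  forall j, Cmod (d j) <= M.
Proof.
  intros Hd HM j.
  assert (Hex : forall w, Cmod w < 1 -> ex_pseries d w) by (intros w Hw; exists (psi w); exact (Hd w Hw)).
  apply (limit_to_1 _ _ j); [apply Cmod_ge_0|].
  intros r Hr.
  set (s := (1 + r) / 2).
  set (K := PSeries (alpha d) s).
  assert (HK : is_series (fun k => alpha d k * s ^ k) K).
  { pose proof (abs_conv d Hex s ltac:(unfold s; lra)) as H.
    eapply is_series_ext; [|exact H]. intros k.
    change (pow_n s k * alpha d k = alpha d k * s ^ k). rewrite pow_n_pow. ring. }
  set (X := Cmod (d j) * r ^ j).
  destruct (Rle_or_lt X M) as [|HXM]; auto. exfalso.
  set (q := r / s).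
  assert (Hq : Rabs q < 1).
  { unfold q, s. rewrite Rabs_pos_eq by (apply Rdiv_le_0_compat; lra).
    apply (Rmult_lt_reg_r ((1 + r) / 2)); [lra|].
    unfold Rdiv. rewrite Rmult_assoc, Rinv_l by lra. lra. }
  pose proof (is_lim_seq_geom q Hq) as Hlim.
  apply is_lim_seq_spec in Hlim.
  assert (Heps : 0 < (X - M) / (Rabs K + 1)).
  { apply Rdiv_lt_0_compat; [lra|]. pose proof (Rabs_pos K); lra. }
  destruct (Hlim (mkposreal _ Heps)) as [N0 HN0].
  set (n0 := Nat.max N0 j).
  specialize (HN0 (S n0) ltac:(unfold n0; lia)). change (Rabs (q ^ S n0 - 0) < (X - M) / (Rabs K + 1)) in HN0.
  rewrite Rminus_0_r in HN0.
  pose proof (cauchy_core d psi M r s K n0 j Hd HM ltac:(lra) ltac:(unfold s; lra) ltac:(unfold s; lra) HK ltac:(unfold n0; lia)) as Hc.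
  fold X q in Hc.
  assert (Hb : q ^ S n0 * K < X - M).
  { apply Rle_lt_trans with (Rabs (q ^ S n0) * Rabs K).
    - rewrite <- Rabs_mult. apply Rle_abs.
    - apply Rle_lt_trans with ((X - M) / (Rabs K + 1) * Rabs K).
      + apply Rmult_le_compat_r; [apply Rabs_pos| lra].
      + apply (Rmult_lt_reg_r (Rabs K + 1)); [pose proof (Rabs_pos K); lra|].
        replace ((X - M) / (Rabs K + 1) * Rabs K * (Rabs K + 1)) with ((X - M) * Rabs K) by (field; pose proof (Rabs_pos K); lra).
        pose proof (Rabs_pos K). nra. }
  lra.
Qed.

Definition Lsum (N : nat) (r : R) : R := sum_n (fun m => r ^ (S m) / INR (S m)) N.

Lemma geom_R (c : R) N : (1 - c) * sum_n (fun m => c ^ m) N = 1 - c ^ (S N).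
Proof.
  induction N as [|N IH].
  - rewrite sum_O. simpl. ring.
  - rewrite sum_Sn. change ((1 - c) * (sum_n (fun m => c ^ m) N + c ^ S N) = 1 - c ^ S (S N)).
    rewrite Rmult_plus_distr_l, IH. simpl. ring.
Qed.

Lemma Lsum_derive N x : is_derive (Lsum N) x (sum_n (fun m => x ^ m) N).
Proof.
  unfold Lsum. apply (is_derive_sum_n (fun m y => y ^ (S m) / INR (S m))).
  intros k _. auto_derive; [auto|].
  change (match k with 0%nat => 1 | S _ => INR k + 1 end) with (INR (S k)).
  field. apply not_0_INR. lia.
Qed.

Lemma Lsum_0 N : Lsum N 0 = 0.
Proof.
  unfold Lsum. rewrite (sum_n_ext _ (fun _ => 0)).
  - rewrite sum_n_const. ring.
  - intros m. simpl. unfold Rdiv. ring.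
Qed.

Lemma Lsum_le N r : 0 <= r < 1 -> Lsum N r <= - ln (1 - r).
Proof.
  intros Hr.
  set (h := fun x => - ln (1 - x) - Lsum N x).
  set (dh := fun x => / (1 - x) - sum_n (fun m => x ^ m) N).
  assert (Hd : forall x, x < 1 -> is_derive h x (dh x)).
  { intros x Hx. unfold h, dh. apply (is_derive_minus (fun x => - ln (1 - x)) (Lsum N)).
    - auto_derive; [lra|]. field. lra.
    - apply Lsum_derive. }
  destruct (Req_dec r 0) as [E|E].
  { subst r. rewrite Lsum_0, Rminus_0_r, ln_1. lra. }
  destruct (MVT_gen h 0 r dh) as [c [Hc Hmvt]].
  - intros x Hx. rewrite Rmin_left, Rmax_right in Hx by lra. apply Hd. lra.
  - intros x Hx. rewrite Rmin_left, Rmax_right in Hx by lra.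
    apply continuity_pt_filterlim. apply (ex_derive_continuous h).
    exists (dh x). apply Hd. lra.
  - rewrite Rmin_left, Rmax_right in Hc by lra.
    assert (Hdh : 0 <= dh c).
    { unfold dh. pose proof (geom_R c N) as G.
      assert (Hsum : forall S0 : R, (1 - c) * S0 = 1 - c ^ S N -> S0 = (1 - c ^ S N) / (1 - c))
        by (intros S0 HS0; rewrite <- HS0; field; lra).
      rewrite (Hsum _ G). replace (/ (1 - c) - (1 - c ^ S N) / (1 - c)) with (c ^ S N / (1 - c)) by (field; lra).
      apply Rdiv_le_0_compat; [apply pow_le; lra | lra]. }
    unfold h in Hmvt. rewrite Lsum_0 in Hmvt. replace (1 - 0) with 1 in Hmvt by ring. rewrite ln_1 in Hmvt.
    assert (0 <= dh c * (r - 0)) by (apply Rmult_le_pos; lra).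
    lra.
Qed.

Definition beta (k : nat) : R := if Nat.leb 3 k then / (2 * (INR k - 1)) else 0.

Lemma beta_nonneg k : 0 <= beta k.
Proof.
  unfold beta. destruct (Nat.leb 3 k) eqn:E; [|lra].
  apply Nat.leb_le in E. apply Rlt_le, Rinv_0_lt_compat.
  assert (3 <= INR k) by (replace 3 with (INR 3) by (simpl; ring); apply le_INR; auto). lra.
Qed.

Lemma sum0 N r : sum_n (fun k => beta k * r ^ k) (S (S N)) = r / 2 * (Lsum N r - r).
Proof.
  induction N as [|N IH].
  - unfold Lsum. rewrite !sum_n_Reals. simpl. unfold beta. simpl. field.
  - rewrite sum_Sn, IH. unfold Lsum. rewrite sum_Sn. fold (Lsum N r).
    unfold beta. simpl Nat.leb. cbv iota.
    change (r / 2 * (Lsum N r - r) + / (2 * (INR (S (S (S N))) - 1)) * r ^ S (S (S N)) =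
      r / 2 * (Lsum N r + r ^ S (S N) / INR (S (S N)) - r)).
    rewrite !S_INR. simpl pow. field. pose proof (pos_INR N). lra.
Qed.

Lemma sum1 N r : r <> 1 ->
  sum_n (fun k => INR (S k) * beta (S k) * r ^ k) (S N) =
  / 2 * (r ^ 2 * (1 - r ^ N) / (1 - r)) + / 2 * (Lsum N r - r).
Proof.
  intros Hr1. assert (1 - r <> 0) by lra.
  induction N as [|N IH].
  - unfold Lsum. rewrite !sum_n_Reals. simpl. unfold beta. simpl. field. auto.
  - rewrite sum_Sn, IH. unfold Lsum. rewrite sum_Sn. fold (Lsum N r).
    unfold beta. simpl Nat.leb. cbv iota.
    change (/ 2 * (r ^ 2 * (1 - r ^ N) / (1 - r)) + / 2 * (Lsum N r - r) +
       INR (S (S (S N))) * / (2 * (INR (S (S (S N))) - 1)) * r ^ S (S N) =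
       / 2 * (r ^ 2 * (1 - r ^ S N) / (1 - r)) + / 2 * (Lsum N r + r ^ S (S N) / INR (S (S N)) - r)).
    rewrite !S_INR. simpl pow. field. pose proof (pos_INR N). split; lra.
Qed.

Lemma sum2 N r : r <> 1 ->
  sum_n (fun k => r * (INR (S k) * (INR (S (S k)) * beta (S (S k)))) * r ^ k) N =
  / 2 * (/ (1 - r) ^ 2 - 1 - 2 * r
     - (INR (S (S (S N))) * r ^ (S (S N)) - INR (S (S N)) * r ^ (S (S (S N)))) / (1 - r) ^ 2).
Proof.
  intros Hr1. assert (1 - r <> 0) by lra.
  induction N as [|N IH].
  - rewrite sum_O. unfold beta. simpl. field. auto.
  - rewrite sum_Sn, IH.
    unfold beta. simpl Nat.leb. cbv iota.
    change (/ 2 * (/ (1 - r) ^ 2 - 1 - 2 * r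
     - (INR (S (S (S N))) * r ^ (S (S N)) - INR (S (S N)) * r ^ (S (S (S N)))) / (1 - r) ^ 2) +
      r * (INR (S (S N)) * (INR (S (S (S N))) * / (2 * (INR (S (S (S N))) - 1)))) * r ^ S N =
      / 2 * (/ (1 - r) ^ 2 - 1 - 2 * r
     - (INR (S (S (S (S N)))) * r ^ (S (S (S N))) - INR (S (S (S N))) * r ^ (S (S (S (S N))))) / (1 - r) ^ 2)).
    rewrite !S_INR. simpl pow. field. pose proof (pos_INR N). split; lra.
Qed.

Lemma sum_n_mono (b : nat -> R) N m : (forall k, 0 <= b k) -> sum_n b N <= sum_n b (m + N).
Proof.
  intros H. induction m as [|m IH]; simpl; [lra|].
  rewrite sum_Sn. change (sum_n b N <= sum_n b (m + N) + b (S (m + N))). specialize (H (S (m + N))). lra.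
Qed.

Lemma bound0 N r : 0 <= r < 1 ->
  sum_n (fun k => beta k * r ^ k) N <= - (r / 2) * ln (1 - r) - r ^ 2 / 2.
Proof.
  intros Hr. eapply Rle_trans.
  - apply (sum_n_mono _ N 2). intros k. apply Rmult_le_pos; [apply beta_nonneg|apply pow_le; lra].
  - change (2 + N)%nat with (S (S N)). rewrite sum0. pose proof (Lsum_le N r Hr).
    replace (- (r / 2) * ln (1 - r) - r ^ 2 / 2) with (r / 2 * (- ln (1 - r) - r)) by field.
    apply Rmult_le_compat_l; lra.
Qed.

Lemma bound1 N r : 0 <= r < 1 ->
  sum_n (fun k => INR (S k) * beta (S k) * r ^ k) N <= (2 * r ^ 2 - r) / (2 * (1 - r)) - ln (1 - r) / 2.
Proof.
  intros Hr. eapply Rle_trans.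
  - apply (sum_n_mono _ N 1). intros k. apply Rmult_le_pos; [apply Rmult_le_pos; [apply pos_INR|apply beta_nonneg]|apply pow_le; lra].
  - change (1 + N)%nat with (S N). rewrite sum1 by lra. pose proof (Lsum_le N r Hr).
    pose proof (pow_le r N (proj1 Hr)).
    assert (r ^ 2 * (1 - r ^ N) / (1 - r) <= r ^ 2 / (1 - r)).
    { unfold Rdiv. apply Rmult_le_compat_r; [apply Rlt_le, Rinv_0_lt_compat; lra|].
      pose proof (pow2_ge_0 r). nra. }
    replace ((2 * r ^ 2 - r) / (2 * (1 - r)) - ln (1 - r) / 2) with
      (/ 2 * (r ^ 2 / (1 - r)) + / 2 * (- ln (1 - r) - r)) by (field; lra).
    lra.
Qed.

Lemma bound2 N r : 0 <= r < 1 ->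
  sum_n (fun k => r * (INR (S k) * (INR (S (S k)) * beta (S (S k)))) * r ^ k) N <=
  r ^ 2 * (3 - 2 * r) / (2 * (1 - r) ^ 2).
Proof.
  intros Hr. rewrite sum2 by lra.
  assert (HQ : 0 <= (INR (S (S (S N))) * r ^ (S (S N)) - INR (S (S N)) * r ^ (S (S (S N)))) / (1 - r) ^ 2).
  { apply Rdiv_le_0_compat; [|apply pow_lt; lra].
    rewrite (S_INR (S (S N))). change (r ^ S (S (S N))) with (r * r ^ S (S N)).
    pose proof (pow_le r (S (S N)) (proj1 Hr)). pose proof (pos_INR (S (S N))).
    set (p := r ^ S (S N)) in *. set (J := INR (S (S N))) in *.
    replace ((J + 1) * p - J * (r * p)) with (p + J * p * (1 - r)) by ring.
    assert (0 <= J * p * (1 - r)) by (apply Rmult_le_pos; [apply Rmult_le_pos|]; lra). lra. }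
  replace (r ^ 2 * (3 - 2 * r) / (2 * (1 - r) ^ 2)) with (/ 2 * (/ (1 - r) ^ 2 - 1 - 2 * r)) by (field; lra).
  lra.
Qed.


Lemma sum_n_le (u v : nat -> R) N : (forall k, u k <= v k) -> sum_n u N <= sum_n v N.
Proof.
  intros H. induction N as [|N IH].
  - rewrite !sum_O. auto.
  - rewrite !sum_Sn. change (sum_n u N + u (S N) <= sum_n v N + v (S N)). specialize (H (S N)). lra.
Qed.

Lemma bound_gen (c : nat -> C) (g : C -> C) (z : C) (lam K : R) (b : nat -> R) :
  (forall w, Cmod w < 1 -> is_pseries c w (g w)) -> Cmod z < 1 -> 0 <= lam ->
  (forall k, lam * (Cmod (c k) * Cmod z ^ k) <= b k) -> (forall N, sum_n b N <= K) ->
  lam * Cmod (g z) <= K.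
Proof.
  intros Hg Hz Hlam Hb HK.
  assert (Hex : forall w, Cmod w < 1 -> ex_pseries c w) by (intros w Hw; exists (g w); exact (Hg w Hw)).
  set (r := Cmod z).
  assert (Hr : 0 <= r < 1) by (split; [apply Cmod_ge_0|exact Hz]).
  set (B := PSeries (alpha c) r).
  assert (HB : is_series (fun k => alpha c k * r ^ k) B).
  { pose proof (abs_conv c Hex r Hr) as H.
    eapply is_series_ext; [|exact H]. intros k.
    change (pow_n r k * alpha c k = alpha c k * r ^ k). rewrite pow_n_pow. ring. }
  assert (H1 : Cmod (g z) <= B).
  { apply (series_norm_le _ _ _ _ (Hg z Hz) HB). intros k.
    change (Cmod (Cmult (pow_n z k) (c k)) <= alpha c k * r ^ k).
    rewrite Cmod_mult, Cmod_pow_n. unfold alpha, r. right; ring. }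
  assert (H2 : lam * B <= K).
  { apply (series_le_bound (fun k => lam * (alpha c k * r ^ k))).
    - exact (is_series_scal lam _ _ HB).
    - intros N. eapply Rle_trans; [|apply (HK N)]. apply sum_n_le. intros k. apply Hb. }
  pose proof (Rmult_le_compat_l lam _ _ Hlam H1). lra.
Qed.

Lemma derive_series (c : nat -> C) (g : C -> C) :
  (forall w, Cmod w < 1 -> is_pseries c w (g w)) ->
  forall w, Cmod w < 1 -> is_pseries (dC c) w (C_derive g w).
Proof.
  intros Hg w Hw.
  assert (Hex : forall w, Cmod w < 1 -> ex_pseries c w) by (intros w' Hw'; exists (g w'); exact (Hg w' Hw')).
  destruct (dC_conv c Hex w Hw) as [l1 Hl1].
  rewrite (is_C_derive_unique g w l1); [exact Hl1|].
  exact (pseries_derive c g Hg w Hw l1 Hl1).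
Qed.

Theorem lemma1p4 (a : nat -> C) (f phi : C -> C) :
  (forall z : C, in_disk z ->
     @is_pseries C_AbsRing C_NormedModule (f_coef a) z (f z)) ->
  holo_disk phi ->
  (forall z : C, in_disk z -> (Cmod (phi z) <= 1)%R) ->
  (forall z : C, in_disk z ->
     Cminus (Cmult z (C_derive f z)) (f z) =
     Cmult (RtoC (/ 2)) (Cmult (Cmult z z) (phi z))) ->
  forall (n : nat) (rho : C -> C),
    (2 <= n)%nat ->
    (forall z : C, in_disk z ->
       @is_pseries C_AbsRing C_NormedModule (tail_coef a n) z (rho z)) ->
    forall z : C, in_disk z ->
      let r := Cmod z in
      (Cmod (rho z) <= - (r / 2) * ln (1 - r) - r ^ 2 / 2)%R /\
      (Cmod (C_derive rho z) <= (2 * r ^ 2 - r) / (2 * (1 - r)) - ln (1 - r) / 2)%R /\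
      (Cmod (Cmult z (C_derive (C_derive rho) z))
         <= r ^ 2 * (3 - 2 * r) / (2 * (1 - r) ^ 2))%R.
Proof.
  intros Hf _ Hphi Heq n rho Hn Hrho z Hz r.
  unfold in_disk in *.
  set (c := f_coef a).
  assert (Hfd : forall w, Cmod w < 1 -> is_pseries (dC c) w (C_derive f w))
    by (apply derive_series; exact Hf).
  set (d := fun k => Cmult (RtoC (INR k - 1)) (c k)).
  assert (Hpsi : forall w, Cmod w < 1 -> is_pseries d w (Cminus (Cmult w (C_derive f w)) (f w))).
  { intros w Hw. pose proof (Hfd w Hw) as H1.
    pose proof (@is_series_scal C_AbsRing C_NormedModule w _ _ H1) as H2.
    assert (H3 : is_series (fun k => Cmult (pow_n w k) (Cmult (RtoC (INR k)) (c k))) (Cmult w (C_derive f w))).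
    { apply is_series_decr_1.
      match goal with |- is_series _ ?L => replace L with (Cmult w (C_derive f w)) end.
      - eapply is_series_ext; [|exact H2]. intros k.
        change (@eq C (Cmult w (Cmult (pow_n w k) (Cmult (RtoC (INR (S k))) (c (S k)))))
                      (Cmult (Cmult w (pow_n w k)) (Cmult (RtoC (INR (S k))) (c (S k))))). ring.
      - change (@eq C (Cmult w (C_derive f w))
                      (Cplus (Cmult w (C_derive f w)) (Copp (Cmult (pow_n w 0) (Cmult (RtoC 0) (c 0%nat)))))). ring. }
    pose proof (is_series_minus _ _ _ _ H3 (Hf w Hw)) as H4.
    eapply is_series_ext; [|exact H4]. intros k. unfold d. rewrite RtoC_minus.
    change (@eq C (Cplus (Cmult (pow_n w k) (Cmult (RtoC (INR k)) (c k))) (Copp (Cmult (pow_n w k) (c k))))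
                  (Cmult (pow_n w k) (Cmult (Cminus (RtoC (INR k)) (RtoC 1)) (c k)))). ring. }
  assert (Hpsib : forall w, Cmod w < 1 -> Cmod (Cminus (Cmult w (C_derive f w)) (f w)) <= / 2).
  { intros w Hw. rewrite Heq by exact Hw. rewrite !Cmod_mult, Cmod_R, Rabs_pos_eq by lra.
    pose proof (Hphi w Hw). pose proof (Cmod_ge_0 w). pose proof (Cmod_ge_0 (phi w)).
    assert (Cmod w * Cmod w <= 1) by nra.
    assert (Cmod w * Cmod w * Cmod (phi w) <= 1).
    { apply Rle_trans with (1 * 1); [apply Rmult_le_compat; auto; apply Rmult_le_pos; auto | lra]. }
    lra. }
  pose proof (cauchy_est d _ (/ 2) Hpsi Hpsib) as Hdk.
  assert (Hak : forall k, (3 <= k)%nat -> Cmod (a k) <= / (2 * (INR k - 1))).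
  { intros k Hk. specialize (Hdk k). unfold d, c, f_coef in Hdk.
    destruct k as [|[|k]]; try lia.
    assert (HI : 3 <= INR (S (S k))) by (replace 3 with (INR 3) by (simpl; ring); apply le_INR; auto).
    rewrite Cmod_mult, Cmod_R, Rabs_pos_eq in Hdk by lra.
    apply (Rmult_le_reg_l (INR (S (S k)) - 1)); [lra|].
    replace ((INR (S (S k)) - 1) * / (2 * (INR (S (S k)) - 1))) with (/ 2) by (field; lra).
    exact Hdk. }
  set (t := tail_coef a n).
  assert (Htb : forall k, Cmod (t k) <= beta k).
  { intros k. unfold t, tail_coef. destruct (Nat.ltb n k) eqn:E.
    - apply Nat.ltb_lt in E. unfold beta.
      replace (Nat.leb 3 k) with true by (symmetry; apply Nat.leb_le; lia). apply Hak; lia.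
    - rewrite Cmod_0. apply beta_nonneg. }
  assert (H1 : forall w, Cmod w < 1 -> is_pseries (dC t) w (C_derive rho w))
    by (apply derive_series; exact Hrho).
  assert (H2 : forall w, Cmod w < 1 -> is_pseries (dC (dC t)) w (C_derive (C_derive rho) w))
    by (apply derive_series; exact H1).
  assert (Hr : 0 <= r < 1) by (split; [apply Cmod_ge_0|exact Hz]).
  assert (Hrk : forall k, 0 <= r ^ k) by (intros; apply pow_le; lra).
  split; [|split].
  - rewrite <- (Rmult_1_l (Cmod (rho z))).
    apply (bound_gen t rho z 1 _ (fun k => beta k * r ^ k) Hrho Hz ltac:(lra)).
    + intros k. fold r. rewrite Rmult_1_l. apply Rmult_le_compat_r; auto.
    + intros N. apply bound0; auto.
  - rewrite <- (Rmult_1_l (Cmod (C_derive rho z))).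
    apply (bound_gen (dC t) (C_derive rho) z 1 _ (fun k => INR (S k) * beta (S k) * r ^ k) H1 Hz ltac:(lra)).
    + intros k. fold r. rewrite Rmult_1_l. apply Rmult_le_compat_r; auto.
      unfold dC. rewrite Cmod_mult, Cmod_R, Rabs_pos_eq by apply pos_INR.
      apply Rmult_le_compat_l; [apply pos_INR | apply Htb].
    + intros N. apply bound1; auto.
  - rewrite Cmod_mult. fold r.
    apply (bound_gen (dC (dC t)) (C_derive (C_derive rho)) z r _
      (fun k => r * (INR (S k) * (INR (S (S k)) * beta (S (S k)))) * r ^ k) H2 Hz ltac:(lra)).
    + intros k. fold r. rewrite <- Rmult_assoc. apply Rmult_le_compat_r; auto.
      apply Rmult_le_compat_l; [lra|].
      unfold dC. rewrite !Cmod_mult, !Cmod_R, !Rabs_pos_eq by apply pos_INR.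
      apply Rmult_le_compat_l; [apply pos_INR|]. apply Rmult_le_compat_l; [apply pos_INR | apply Htb].
    + intros N. apply bound2; auto.
Qed.
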